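(* Let $m,n,p,q\in\mathbb{R}$ with $m<0$, let $P(t)=t^5+mt^3+nt^2+pt+q$, and set $u=\frac{2\sqrt{-m}}{\sqrt5}$. Then $P$ has at most three roots on each of the half-lines $(u,\infty)$ and $(-\infty,-u)$. *)

(* Defs.v *)
From mathcomp Require Import all_boot all_order all_algebra.
Set Implicit Arguments. Unset Strict Implicit. Unset Printing Implicit Defensive.
Import Order.TTheory GRing.Theory Num.Theory.
Local Open Scope ring_scope.

Definition quinticP (R : ringType) (m n p q : R) : {poly R} :=
  'X^5 + m%:P * 'X^3 + n%:P * 'X^2 + p%:P * 'X + q%:P.

(* Main.v *)
Require Import Defs.
From mathcomp Require Import all_boot all_order all_algebra.
From mathcomp Require Import polyrcf.
From mathcomp Require Import ring lra.
Import Order.TTheory GRing.Theory Num.Theory.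
Local Open Scope ring_scope.

Section S.
Variable R : rcfType.

Lemma rolle_path (I : pred R) (p : {poly R}) :
  (forall a b c, I a -> I b -> a < c -> c < b -> I c) ->
  forall s x, path <%O x s -> I x -> all I s -> root p x -> all (root p) s ->
  exists s', size s' = size s /\ path <%O x s' /\ all I s' /\ all (root p^`()) s'.
Proof.
move=> hI; elim=> [|y s IH] x.
  by move=> *; exists [::].
move=> /= /andP[xy py] Ix /andP[Iy Is] rx /andP[ry rs].
have [s'' [hs [ps [Is'' rs'']]]] := IH y py Iy Is ry rs.
have [c] := poly_rolle xy (etrans (eqP rx) (esym (eqP ry))); rewrite in_itv /= => /andP[xc cy] dc.
exists (c :: s''); split; first by rewrite /= hs.
split; last by rewrite /= (hI x y c) // Is'' /root dc eqxx rs''.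
rewrite /= xc /=; case: s'' ps {hs Is'' rs''} => //= z t /andP[yz ->].
by rewrite (lt_trans cy yz).
Qed.

Lemma third (m n p q z : R) :
  ((quinticP m n p q)^`()^`()^`()).[z] = 60 * z ^+ 2 + 6 * m.
Proof.
rewrite /quinticP !derivE !hornerE /=.
ring. Qed.

Lemma count3 (I : pred R) (P : {poly R}) :
  (forall a b c, I a -> I b -> a < c -> c < b -> I c) ->
  (forall z, I z -> (P^`()^`()^`()).[z] != 0) ->
  forall s, uniq s -> all I s -> all (root P) s -> (size s <= 3)%N.
Proof.
move=> hI hP s us Is rs.
have st : sorted <%O (sort <=%O s) by rewrite sort_lt_sorted.
rewrite -(size_sort <=%O s); rewrite -(all_sort _ <=%O) in Is; rewrite -(all_sort _ <=%O) in rs.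
move: st Is rs; case: (sort _ _) => [|x t]; first by [].
move=> /= pt /andP[Ix It] /andP[rx rt].
rewrite leqNgt; apply/negP => ht.
have [s1 [hs1 [p1 [I1 r1]]]] := @rolle_path I P hI _ _ pt Ix It rx rt.
move: hs1 p1 I1 r1; case: s1 => [|y s1] /=; first by move=> h; rewrite -h in ht.
move=> hs1 /andP[_ p1] /andP[Iy I1] /andP[ry r1].
have [s2 [hs2 [p2 [I2 r2]]]] := @rolle_path I P^`() hI _ _ p1 Iy I1 ry r1.
move: hs2 p2 I2 r2; case: s2 => [|z s2] /=; first by move=> h; rewrite -hs1 -h in ht.
move=> hs2 /andP[_ p2] /andP[Iz I2] /andP[rz r2].
have [s3 [hs3 [p3 [I3 r3]]]] := @rolle_path I P^`()^`() hI _ _ p2 Iz I2 rz r2.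
move: hs3 p3 I3 r3; case: s3 => [|w s3] /=; first by move=> h; rewrite -hs1 -hs2 -h in ht.
move=> _ _ /andP[Iw _] /andP[rw _].
by move: (hP w Iw); rewrite -/(root _ w) rw.
Qed.
End S.

Theorem corollary2 (R : rcfType) (m n p q : R) (hm : m < 0) :
  let P := quinticP m n p q in
  let u := 2 * Num.sqrt (- m) / Num.sqrt 5 in
  (forall s : seq R, uniq s -> (forall x, x \in s -> u < x /\ root P x) ->
     (size s <= 3)%N) /\
  (forall s : seq R, uniq s -> (forall x, x \in s -> x < - u /\ root P x) ->
     (size s <= 3)%N).
Proof.
move=> P u.
have hu0 : 0 <= u by rewrite /u mulr_ge0 ?invr_ge0 ?sqrtr_ge0 // mulr_ge0 ?sqrtr_ge0.
have hu2 : u ^+ 2 = 4 / 5 * (- m).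
  rewrite /u expr_div_n exprMn !sqr_sqrtr //; last by lra.
  by field.
have key : forall z, u ^+ 2 < z ^+ 2 -> (P^`()^`()^`()).[z] != 0.
  move=> z hz; rewrite third; apply/negP => /eqP h; nra.
split=> s us hs.
- apply: (@count3 R (fun x => u < x) P) => //.
  + by move=> a b c ha _ hac _; exact: lt_trans ha hac.
  + by move=> z /= hz; apply: key; nra.
  + by apply/allP => x /hs [].
  + by apply/allP => x /hs [].
- apply: (@count3 R (fun x => x < - u) P) => //.
  + by move=> a b c _ hb _ hcb; exact: lt_trans hcb hb.
  + by move=> z /= hz; apply: key; nra.
  + by apply/allP => x /hs [].
  + by apply/allP => x /hs [].
Qed.
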